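(* Let $n\geq 2$, $\mathfrak g=\mathfrak{sl}(n+1,\mathbb R)$ with the $|1|$-grading $\mathfrak g=\mathfrak g_{-1}\oplus\mathfrak g_0\oplus\mathfrak g_1$ described below, and let $0\neq Z\in\mathfrak g_1$. Then $$0=C(Z)\subset F(Z)=\{X\in\mathfrak g_{-1}: ZX=0\},\qquad T(Z)=\{X\in\mathfrak g_{-1}: ZX=1\}.$$ Moreover, for every $X\in T(Z)$ the element $A=[Z,X]\in\mathfrak g_0$ acts diagonalizably on $\mathfrak g_{-1}$ and on $\mathbb W$, and: (1) for each $X\in T(Z)$ all eigenvalues of $A$ on $\mathfrak g_{-1}$ are non-positive and the $0$-eigenspace of $A$ on $\mathfrak g_{-1}$ coincides with $C(Z)$; (2) for each $X\in T(Z)$, $\mathbb W_{ss}(A)=0$; (3) $\bigcap_{X\in T(Z)}\mathbb W_{st}(A)=0$.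
   Context: Write elements of $\mathfrak{sl}(n+1,\mathbb R)$ in block form with blocks of sizes $1$ and $n$ as $\begin{pmatrix}-\mathrm{tr}(A) & Z\\ X & A\end{pmatrix}$ with $X\in\mathbb R^n$ (column), $A\in\mathfrak{gl}(n,\mathbb R)$, $Z\in\mathbb R^{n*}$ (row). The grading components $\mathfrak g_{-1},\mathfrak g_0,\mathfrak g_1$ are the parts given by $X$, $A$ and $Z$ respectively, and the bracket is the matrix commutator; for $Z\in\mathfrak g_1$, $X\in\mathfrak g_{-1}$, $ZX$ denotes the real number given by the matrix product. For $Z\in\mathfrak g_1$ define $C(Z)=\{X\in\mathfrak g_{-1}:[X,Z]=0\}$, $F(Z)=\{X\in\mathfrak g_{-1}:[X,[X,Z]]=0\}$, and $T(Z)=\{X\in\mathfrak g_{-1}:[[Z,X],X]=-2X,\ [[Z,X],Z]=2Z\}$. The group $G_0\cong GL(n,\mathbb R)$ acts on $\mathfrak g_{\pm1}$ by the adjoint action. $\mathbb W$ denotes the representation of $\mathfrak g_0$ in which the harmonic curvature of projective structures takes values: for $n>2$ it is the subrepresentation of $\Lambda^2\mathfrak g_1\otimes\mathfrak{sl}(\mathfrak g_{-1})$ of projective Weyl curvature tensors (totally trace-free curvature-type tensors); for $n=2$ it is the subrepresentation of $\Lambda^2\mathfrak g_1\otimes\mathfrak g_1$ in which the projective Cotton–York tensor takes values. For $A\in\mathfrak g_0$ acting diagonalizably on a representation $\mathbb W$, $\mathbb W_{ss}(A)$ (resp. $\mathbb W_{st}(A)$) is the sum of eigenspaces of $A$ with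 negative (resp. non-positive) eigenvalues. *)

(* Defs.v *)
(* g = sl(n+1,R) realised as (1+n)x(1+n) real matrices in
   block form (blocks of size 1 and n); R : realType stands for the reals. *)
From HB Require Import structures.
From mathcomp Require Import all_boot all_order all_algebra.
From mathcomp Require Export reals.
Set Implicit Arguments. Unset Strict Implicit. Unset Printing Implicit Defensive.
Import Order.TTheory GRing.Theory Num.Theory.
Local Open Scope ring_scope.

Section Defs.
Variables (R : realType) (n : nat).

Definition br (A B : 'M[R]_(1 + n)) : 'M[R]_(1 + n) := A *m B - B *m A.

Definition gm1 (X : 'cV[R]_n) : 'M[R]_(1 + n) := block_mx 0 0 X 0.
Definition g1 (Z : 'rV[R]_n) : 'M[R]_(1 + n) := block_mx 0 Z 0 0.

Definition pair (Z : 'rV[R]_n) (X : 'cV[R]_n) : R := (Z *m X) 0 0.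

Definition inC (Z : 'rV[R]_n) (X : 'cV[R]_n) : Prop := br (gm1 X) (g1 Z) = 0.
Definition inF (Z : 'rV[R]_n) (X : 'cV[R]_n) : Prop :=
  br (gm1 X) (br (gm1 X) (g1 Z)) = 0.
Definition inT (Z : 'rV[R]_n) (X : 'cV[R]_n) : Prop :=
  br (br (g1 Z) (gm1 X)) (gm1 X) = - 2%:R *: gm1 X /\
  br (br (g1 Z) (gm1 X)) (g1 Z) = 2%:R *: g1 Z.

Definition em1 (j : 'I_n) : 'cV[R]_n := delta_mx j 0.
Definition e1 (j : 'I_n) : 'rV[R]_n := delta_mx 0 j.

(* matrices of ad(A) on g_{-1} and on g_1 in these bases (for A in g_0):
   Bm A k m = coefficient of e_k in [A, e_m];
   Cm A p i = coefficient of eps^p in [A, eps^i]. *)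
Definition Bm (A : 'M[R]_(1 + n)) : 'M[R]_n :=
  \matrix_(k, m) (dlsubmx (br A (gm1 (em1 m)))) k 0.
Definition Cm (A : 'M[R]_(1 + n)) : 'M[R]_n :=
  \matrix_(p, i) (ursubmx (br A (g1 (e1 i)))) 0 p.

(* ---- n > 2 : projective Weyl tensors in Lambda^2 g_1 (x) sl(g_{-1}) ----
   R[i,j,k,l] = component of eps^i (x) eps^j (x) e_k (x) eps^l, i.e.
   R(X,Y)W = sum R[i,j,k,l] X^i Y^j W^l e_k. *)
Definition tens4 := {ffun 'I_n * 'I_n * 'I_n * 'I_n -> R^o}.

Definition inWeyl (T : tens4) : Prop :=
  (* in Lambda^2 g_1 (x) gl(g_{-1}) *)
  (forall i j k l, T (i, j, k, l) = - T (j, i, k, l)) /\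
  (* values in sl(g_{-1}) *)
  (forall i j, \sum_k T (i, j, k, k) = 0) /\
  (* curvature type: algebraic Bianchi identity *)
  (forall i j k l, T (i, j, k, l) + T (j, l, k, i) + T (l, i, k, j) = 0) /\
  (* totally trace-free: the remaining traces vanish *)
  (forall j l, \sum_k T (k, j, k, l) = 0) /\
  (forall i l, \sum_k T (i, k, k, l) = 0).

Definition actWeyl (A : 'M[R]_(1 + n)) (T : tens4) : tens4 :=
  [ffun t => let: (p, q, r, s) := t in
     \sum_m (Cm A p m * T (m, q, r, s) + Cm A q m * T (p, m, r, s)
             + Bm A r m * T (p, q, m, s) + Cm A s m * T (p, q, r, m))].

(* ---- n = 2 : values of the Cotton-York tensor, Lambda^2 g_1 (x) g_1 ---- *)
Definition tens3 := {ffun 'I_n * 'I_n * 'I_n -> R^o}.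

Definition inCY (T : tens3) : Prop :=
  forall i j l, T (i, j, l) = - T (j, i, l).

Definition actCY (A : 'M[R]_(1 + n)) (T : tens3) : tens3 :=
  [ffun t => let: (p, q, s) := t in
     \sum_m (Cm A p m * T (m, q, s) + Cm A q m * T (p, m, s)
             + Cm A s m * T (p, q, m))].

End Defs.

Definition sum_of_eig (R : realType) (V : lmodType R)
    (eig : R -> V -> Prop) (Q : R -> Prop) (v : V) : Prop :=
  exists (m : nat) (l : 'I_m -> R) (w : 'I_m -> V),
    (forall k, Q (l k) /\ eig (l k) (w k)) /\ v = \sum_k w k.

Definition eig_on (R : realType) (V : lmodType R) (P : V -> Prop)
    (f : V -> V) (l : R) (v : V) : Prop := P v /\ f v = l *: v.

Definition diag_on (R : realType) (V : lmodType R) (P : V -> Prop)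
    (f : V -> V) : Prop :=
  forall v, P v -> sum_of_eig (eig_on P f) (fun _ => True) v.

Definition in_ss (R : realType) (V : lmodType R) (P : V -> Prop)
    (f : V -> V) (v : V) : Prop := sum_of_eig (eig_on P f) (fun l => l < 0) v.
Definition in_st (R : realType) (V : lmodType R) (P : V -> Prop)
    (f : V -> V) (v : V) : Prop := sum_of_eig (eig_on P f) (fun l => l <= 0) v.

(* The statements about W for a given model (V, inW, act) of the representation W *)
Definition W_claims (R : realType) (n : nat) (Z : 'rV[R]_n) (V : lmodType R)
    (inW : V -> Prop) (act : 'M[R]_(1 + n) -> V -> V) : Prop :=
  (forall X, inT Z X -> diag_on inW (act (br (g1 Z) (gm1 X)))) /\
  (forall X, inT Z X -> forall w, in_ss inW (act (br (g1 Z) (gm1 X))) w -> w = 0) /\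
  (forall w, (forall X, inT Z X -> in_st inW (act (br (g1 Z) (gm1 X))) w) -> w = 0).

(* Main.v *)
Require Import Defs.
From HB Require Import structures.
From mathcomp Require Import all_boot all_order all_algebra.
From mathcomp Require Import reals.
From mathcomp Require Import ring lra.
Set Implicit Arguments. Unset Strict Implicit. Unset Printing Implicit Defensive.
Import Order.TTheory GRing.Theory Num.Theory.
Local Open Scope ring_scope.

Section SOE.
Variables (R : realType) (V : lmodType R).

Lemma soe0 E Q : @sum_of_eig R V E Q 0.
Proof.
exists 0%N, (fun _ => 0), (fun _ => 0); split; first by case.
by rewrite big_ord0.
Qed.

Lemma soe1 (E : R -> V -> Prop) (Q : R -> Prop) l v : Q l -> E l v -> sum_of_eig E Q v.
Proof.
move=> Ql El; exists 1%N, (fun _ => l), (fun _ => v); split => //.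
by rewrite big_ord1.
Qed.

Lemma soeD E Q a b : @sum_of_eig R V E Q a -> sum_of_eig E Q b -> sum_of_eig E Q (a + b).
Proof.
move=> [m1 [l1 [w1 [H1 ->]]]] [m2 [l2 [w2 [H2 ->]]]].
exists (m1 + m2)%N, (fun k => match split k with inl i => l1 i | inr j => l2 j end),
  (fun k => match split k with inl i => w1 i | inr j => w2 j end); split.
  by move=> k; case: (split k).
rewrite big_split_ord /=; congr (_ + _); apply: eq_bigr => i _.
  by rewrite (unsplitK (inl _ : 'I_m1 + 'I_m2)).
by rewrite (unsplitK (inr _ : 'I_m1 + 'I_m2)).
Qed.

Lemma soe_sum E Q m (F : 'I_m -> V) : (forall k, @sum_of_eig R V E Q (F k)) ->
  sum_of_eig E Q (\sum_k F k).
Proof.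
elim: m F => [|m IH] F HF; first by rewrite big_ord0; apply: soe0.
rewrite big_ord_recr /=; apply: soeD => //; exact: IH.
Qed.

Lemma soe_weak (E E' : R -> V -> Prop) (Q Q' : R -> Prop) v :
  (forall l w, Q l -> E l w -> Q' l /\ E' l w) -> sum_of_eig E Q v -> sum_of_eig E' Q' v.
Proof.
move=> H [m [l [w [Hw ->]]]]; exists m, l, w; split => // k.
by case: (Hw k) => q e; apply: H.
Qed.

Definition Pop (f : V -> V) (L : seq R) (v : V) : V :=
  foldr (fun mu w => f w - mu *: w) v L.

Lemma Pop_ext f f' L v : (forall x, f x = f' x) -> Pop f L v = Pop f' L v.
Proof. by move=> H; elim: L => //= mu L ->; rewrite H. Qed.

Section Lin.
Variable f : V -> V.
Hypothesis fD : forall a b, f (a + b) = f a + f b.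
Hypothesis fZ : forall c a, f (c *: a) = c *: f a.

Lemma f0 : f 0 = 0.
Proof. by rewrite -(scale0r 0) fZ !scale0r. Qed.
Lemma fN a : f (- a) = - f a.
Proof. by rewrite -scaleN1r fZ scaleN1r. Qed.
Lemma fB a b : f (a - b) = f a - f b.
Proof. by rewrite fD fN. Qed.

Lemma PopD L a b : Pop f L (a + b) = Pop f L a + Pop f L b.
Proof.
elim: L => //= mu L ->; rewrite fD scalerDr opprD.
by rewrite addrACA.
Qed.
Lemma PopZ L c a : Pop f L (c *: a) = c *: Pop f L a.
Proof.
elim: L => //= mu L ->; rewrite fZ scalerBr !scalerA mulrC.
by [].
Qed.
Lemma Pop0 L : Pop f L 0 = 0.
Proof. by have := PopZ L 0 0; rewrite !scale0r. Qed.
Lemma PopB L a b : Pop f L (a - b) = Pop f L a - Pop f L b.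
Proof. by rewrite PopD -scaleN1r PopZ scaleN1r. Qed.
Lemma Pop_sum L m (F : 'I_m -> V) : Pop f L (\sum_k F k) = \sum_k Pop f L (F k).
Proof.
elim: m F => [|m IH] F; first by rewrite !big_ord0 Pop0.
by rewrite !big_ord_recr /= PopD IH.
Qed.
Lemma Pop_f L a : Pop f L (f a) = f (Pop f L a).
Proof. by elim: L => //= mu L ->; rewrite fB fZ. Qed.
Lemma Pop_eig L mu a : f a = mu *: a -> Pop f L a = (\prod_(x <- L) (mu - x)) *: a.
Proof.
move=> Ha; elim: L => [|x L IH] /=; first by rewrite big_nil scale1r.
rewrite IH fZ Ha big_cons !scalerA -scalerBl. congr (_ *: _); ring.
Qed.

Lemma Pop_kill L l v : Pop f L v = 0 -> f v = l *: v -> l \notin L -> v = 0.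
Proof.
move=> H0 He Hl; move: H0; rewrite (Pop_eig L He) => /eqP.
rewrite scaler_eq0 => /orP [|/eqP //].
rewrite prodf_seq_eq0 => /hasP [x xL /=]; rewrite subr_eq0 => /eqP Ex.
by move: Hl; rewrite Ex xL.
Qed.

Variable P : V -> Prop.
Hypotheses (P0 : P 0) (PZ : forall c a, P a -> P (c *: a))
  (PB : forall a b, P a -> P b -> P (a - b)) (Pf : forall a, P a -> P (f a)).

Lemma P_Pop L a : P a -> P (Pop f L a).
Proof. by move=> Pa; elim: L => //= mu L IH; apply: PB; [apply: Pf|apply: PZ]. Qed.

Lemma Main L : uniq L -> forall v, P v -> Pop f L v = 0 ->
  sum_of_eig (eig_on P f) (fun l => l \in L) v.
Proof.
elim: L => [|mu L IH] /=; first by move=> _ v _ ->; apply: soe0.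
move=> /andP [muL uL] v Pv H0.
set y := Pop f L v.
have Hy : f y = mu *: y by apply/eqP; rewrite -subr_eq0; apply/eqP.
set q := \prod_(x <- L) (mu - x).
have q0 : q != 0.
  rewrite prodf_seq_neq0; apply/allP => x xL /=; rewrite subr_eq0.
  by apply: contraNneq muL => ->.
set u := q^-1 *: y.
have Hu : f u = mu *: u by rewrite fZ Hy !scalerA mulrC.
have -> : v = u + (v - u) by rewrite addrC subrK.
apply: soeD.
  apply: (@soe1 _ _ mu); first exact: mem_head.
  by split => //; apply: PZ; apply: P_Pop.
apply: (soe_weak (E := eig_on P f) (Q := fun l => l \in L)).
  by move=> l w lL ew; split => //; rewrite inE lL orbT.
apply: IH => //; first by apply: PB => //; apply: PZ; apply: P_Pop.
rewrite PopB /u PopZ (Pop_eig L Hy) scalerA mulVf // scale1r.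
by rewrite subrr.
Qed.
End Lin.

Lemma Pop_of_soe f (fD : forall a b, f (a + b) = f a + f b)
  (fZ : forall c a, f (c *: a) = c *: f a) P L v :
  sum_of_eig (eig_on P f) (fun l => l \in L) v -> Pop f L v = 0.
Proof.
move=> [m [l [w [Hw ->]]]]; rewrite Pop_sum //; apply: big1 => k _.
case: (Hw k) => lL [_ He]; rewrite (Pop_eig fZ L He).
by rewrite (big_rem (l k)) //= subrr mul0r scale0r.
Qed.

Definition sums (La Lb : seq R) := undup [seq x + y | x <- La, y <- Lb].

Lemma combine (g h : V -> V)
  (gD : forall a b, g (a + b) = g a + g b) (gZ : forall c a, g (c *: a) = c *: g a)
  (hD : forall a b, h (a + b) = h a + h b) (hZ : forall c a, h (c *: a) = c *: h a)
  (ghC : forall v, g (h v) = h (g v)) La Lb :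
  uniq La -> uniq Lb -> (forall v, Pop g La v = 0) -> (forall v, Pop h Lb v = 0) ->
  forall v, Pop (fun x => g x + h x) (sums La Lb) v = 0.
Proof.
move=> uA uB HA HB v.
have sD : forall a b, g (a + b) + h (a + b) = (g a + h a) + (g b + h b).
  by move=> a b; rewrite gD hD addrACA.
have sZ : forall c a, g (c *: a) + h (c *: a) = c *: (g a + h a).
  by move=> c a; rewrite gZ hZ scalerDr.
apply: (Pop_of_soe sD sZ (P := fun _ => True)).
have := @Main g gD gZ (fun _ => True) (fun _ _ _ => I) (fun _ _ _ _ => I)
  (fun _ _ => I) La uA v I (HA v).
move=> [m [l [w [Hw ->]]]].
apply: soe_sum => k; case: (Hw k) => lA [_ Hk].
have := @Main h hD hZ (fun u => g u = l k *: u) _ _ _ Lb uB _ Hk (HB _).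
case.
- by move=> c a Pa; rewrite gZ Pa !scalerA mulrC.
- by move=> a b Pa Pb; rewrite fB // Pa Pb scalerBr.
- by move=> a Pa; rewrite ghC Pa hZ.
move=> m' [l' [w' [Hw' ->]]].
apply: soe_sum => j; case: (Hw' j) => lB [Pj Hj].
apply: (@soe1 _ _ (l k + l' j)).
  by rewrite mem_undup; apply: allpairs_f.
by split => //; rewrite Pj Hj scalerDl.
Qed.

Lemma sums_uniq La Lb : uniq (sums La Lb).
Proof. exact: undup_uniq. Qed.

Lemma sums_ge a b La Lb : (forall x, x \in La -> a <= x) -> (forall y, y \in Lb -> b <= y) ->
  forall z, z \in sums La Lb -> a + b <= z.
Proof.
move=> HA HB z; rewrite mem_undup => /allpairsP [[x y] [/= xA yB ->]].
by apply: lerD; [apply: HA|apply: HB].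
Qed.

End SOE.

Section WG.
Variables (R : realType) (V : lmodType R).
Lemma W_generic (f : V -> V)
  (fD : forall a b, f (a + b) = f a + f b) (fZ : forall c a, f (c *: a) = c *: f a)
  (P : V -> Prop) (PZ : forall c a, P a -> P (c *: a))
  (PB : forall a b, P a -> P b -> P (a - b)) (Pf : forall a, P a -> P (f a)) L :
  uniq L -> (forall v, Pop f L v = 0) -> (forall l, l \in L -> 0 < l) ->
  diag_on P f /\ (forall w, in_ss P f w -> w = 0) /\ (forall w, in_st P f w -> w = 0).
Proof.
move=> uL H0 Hpos; split; last split.
- move=> v Pv; apply: (soe_weak (E := eig_on P f) (Q := fun l => l \in L)) => //.
  exact: Main.
- move=> w [m [l [u [Hu ->]]]]; apply: big1 => k _.
  case: (Hu k) => lk [_ Ek]; apply: (Pop_kill fZ (H0 _) Ek).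
  by apply/negP => /Hpos; rewrite ltNge (ltW lk).
- move=> w [m [l [u [Hu ->]]]]; apply: big1 => k _.
  case: (Hu k) => lk [_ Ek]; apply: (Pop_kill fZ (H0 _) Ek).
  by apply/negP => /Hpos; rewrite ltNge lk.
Qed.
End WG.

Section Slot.
Variables (R : realType) (n : nat) (I : finType).
Definition slot (pr : I -> 'I_n) (upd : I -> 'I_n -> I) (K : 'M[R]_n)
  (T : {ffun I -> R^o}) : {ffun I -> R^o} :=
  [ffun t => \sum_m K (pr t) m * T (upd t m)].

Lemma slotD pr upd K a b : slot pr upd K (a + b) = slot pr upd K a + slot pr upd K b.
Proof.
apply/ffunP => t; rewrite !ffunE -big_split /=; apply: eq_bigr => m _.
by rewrite ffunE mulrDr.
Qed.

Lemma slotZ pr upd K c a : slot pr upd K (c *: a) = c *: slot pr upd K a.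
Proof.
apply/ffunP => t; rewrite !ffunE /=.
rewrite [RHS](_ : _ = c * \sum_(m < n) K (pr t) m * a (upd t m)) //.
rewrite mulr_sumr; apply: eq_bigr => m _.
by rewrite ffunE /= mulrCA.
Qed.

Lemma slot_comm pr1 upd1 pr2 upd2 K1 K2 T :
  (forall t m, pr1 (upd2 t m) = pr1 t) -> (forall t m, pr2 (upd1 t m) = pr2 t) ->
  (forall t m m', upd1 (upd2 t m) m' = upd2 (upd1 t m') m) ->
  slot pr1 upd1 K1 (slot pr2 upd2 K2 T) = slot pr2 upd2 K2 (slot pr1 upd1 K1 T).
Proof.
move=> H1 H2 H3; apply/ffunP => t; rewrite !ffunE.
under eq_bigr => m _ do rewrite ffunE H2 mulr_sumr.
under [RHS]eq_bigr => m _ do rewrite ffunE H1 mulr_sumr.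
rewrite exchange_big /=; apply: eq_bigr => m _; apply: eq_bigr => m' _.
by rewrite H3 mulrCA.
Qed.

Lemma slotB pr upd K a b : slot pr upd K (a - b) = slot pr upd K a - slot pr upd K b.
Proof. by rewrite slotD -scaleN1r slotZ scaleN1r. Qed.

Lemma slot_sq pr upd K al be T :
  (forall t m, pr (upd t m) = m) -> (forall t m m', upd (upd t m) m' = upd t m') ->
  (forall t, upd t (pr t) = t) ->
  K *m K = (al + be) *: K - (al * be) *: 1%:M ->
  slot pr upd K (slot pr upd K T) = (al + be) *: slot pr upd K T - (al * be) *: T.
Proof.
move=> H1 H2 H3 HK; apply/ffunP => t /=; rewrite !ffunE /=.
set p := pr t.
  under eq_bigr => m _ do rewrite ffunE H1 mulr_sumr.
  rewrite exchange_big /=.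
  under eq_bigr => m' _ do under eq_bigr => i _ do rewrite H2 mulrA.
  under eq_bigr => m' _ do rewrite -mulr_suml.
  have E : forall m', \sum_i K p i * K i m' = (K *m K) p m' by move=> m'; rewrite mxE.
  under eq_bigr => m' _ do rewrite E HK !mxE.
  under eq_bigr => m' _ do rewrite mulrBl -mulrA -mulrA.
  rewrite sumrB -!mulr_sumr; congr (_ - _); rewrite (bigD1 p) //= big1 ?addr0.
  - by rewrite eqxx mulr1 /p H3.
  - by move=> i /negbTE ip; rewrite eq_sym ip mulr0 mulr0 mul0r.
Qed.

Lemma slot_Pop pr upd K al be T :
  (forall t m, pr (upd t m) = m) -> (forall t m m', upd (upd t m) m' = upd t m') ->
  (forall t, upd t (pr t) = t) ->
  K *m K = (al + be) *: K - (al * be) *: 1%:M ->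
  Pop (slot pr upd K) [:: al; be] T = 0.
Proof.
move=> H1 H2 H3 HK /=; rewrite slotB slotZ (slot_sq T H1 H2 H3 HK).
apply/ffunP => t; rewrite !ffunE /=.
have E : forall S x : R, (al + be) * S - (al * be) * x - be * S - al * (S - be * x) = 0 by move=> *; ring.
exact: E.
Qed.
End Slot.

Section T4.
Variables (R : realType) (n : nat).
Notation I4 := ('I_n * 'I_n * 'I_n * 'I_n)%type.
Definition pr1 (t : I4) := t.1.1.1.
Definition pr2 (t : I4) := t.1.1.2.
Definition pr3 (t : I4) := t.1.2.
Definition pr4 (t : I4) := t.2.
Definition up1 (t : I4) m : I4 := (m, t.1.1.2, t.1.2, t.2).
Definition up2 (t : I4) m : I4 := (t.1.1.1, m, t.1.2, t.2).
Definition up3 (t : I4) m : I4 := (t.1.1.1, t.1.1.2, m, t.2).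
Definition up4 (t : I4) m : I4 := (t.1.1.1, t.1.1.2, t.1.2, m).

Notation S1 K := (@slot R n _ pr1 up1 K).
Notation S2 K := (@slot R n _ pr2 up2 K).
Notation S3 K := (@slot R n _ pr3 up3 K).
Notation S4 K := (@slot R n _ pr4 up4 K).

Lemma actWeyl_slots A (T : tens4 R n) :
  actWeyl A T = S1 (Cm A) T + S2 (Cm A) T + S3 (Bm A) T + S4 (Cm A) T.
Proof.
apply/ffunP => -[[[p q] r] s]; rewrite !ffunE /= !big_split /=.
by [].
Qed.

Definition g4 A (T : tens4 R n) := S1 (Cm A) T + S2 (Cm A) T + S3 (Bm A) T + S4 (Cm A) T.

Lemma Pop_weyl A (HC : Cm A *m Cm A = (1 + 2) *: Cm A - (1 * 2) *: 1%:M)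
  (HB : Bm A *m Bm A = (-1 + -2) *: Bm A - ((-1) * (-2)) *: 1%:M) (T : tens4 R n) :
  Pop (actWeyl A) (sums (sums (sums [:: 1; 2] [:: 1; 2]) [:: -1; -2]) [:: 1; 2]) T = 0.
Proof.
rewrite (Pop_ext _ _ (f' := g4 A)); last by move=> x; rewrite actWeyl_slots.
have u12 : uniq [:: 1; 2 : R] by rewrite /= inE andbT; apply/negP => /eqP; lra.
have u12' : uniq [:: -1; -2 : R] by rewrite /= inE andbT; apply/negP => /eqP; lra.
set C := Cm A; set B := Bm A.
have D1 := @slotD R n _ pr1 up1 C.
have D2 := @slotD R n _ pr2 up2 C.
have D3 := @slotD R n _ pr3 up3 B.
have D4 := @slotD R n _ pr4 up4 C.
have Z1 := @slotZ R n _ pr1 up1 C.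
have Z2 := @slotZ R n _ pr2 up2 C.
have Z3 := @slotZ R n _ pr3 up3 B.
have Z4 := @slotZ R n _ pr4 up4 C.
have P1 : forall v, Pop (S1 C) [:: 1; 2] v = 0.
  by move=> v; apply: slot_Pop => // -[[[a b] c] d].
have P2 : forall v, Pop (S2 C) [:: 1; 2] v = 0.
  by move=> v; apply: slot_Pop => // -[[[a b] c] d].
have P3 : forall v, Pop (S3 B) [:: -1; -2] v = 0.
  by move=> v; apply: slot_Pop => // -[[[a b] c] d].
have P4 : forall v, Pop (S4 C) [:: 1; 2] v = 0.
  by move=> v; apply: slot_Pop => // -[[[a b] c] d].
have c12 : forall v, S1 C (S2 C v) = S2 C (S1 C v).
  by move=> v; apply: slot_comm => // -[[[a b] c] d].
have c13 : forall v, S1 C (S3 B v) = S3 B (S1 C v).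
  by move=> v; apply: slot_comm => // -[[[a b] c] d].
have c23 : forall v, S2 C (S3 B v) = S3 B (S2 C v).
  by move=> v; apply: slot_comm => // -[[[a b] c] d].
have c14 : forall v, S1 C (S4 C v) = S4 C (S1 C v).
  by move=> v; apply: slot_comm => // -[[[a b] c] d].
have c24 : forall v, S2 C (S4 C v) = S4 C (S2 C v).
  by move=> v; apply: slot_comm => // -[[[a b] c] d].
have c34 : forall v, S3 B (S4 C v) = S4 C (S3 B v).
  by move=> v; apply: slot_comm => // -[[[a b] c] d].
have G1D : forall a b, (S1 C (a + b) + S2 C (a + b)) = (S1 C a + S2 C a) + (S1 C b + S2 C b).
  by move=> a b; rewrite D1 D2 addrACA.
have G1Z : forall c a, (S1 C (c *: a) + S2 C (c *: a)) = c *: (S1 C a + S2 C a).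
  by move=> c a; rewrite Z1 Z2 scalerDr.
have Q1 := combine D1 Z1 D2 Z2 c12 u12 u12 P1 P2.
have G2D : forall a b, (S1 C (a + b) + S2 C (a + b) + S3 B (a + b)) =
   (S1 C a + S2 C a + S3 B a) + (S1 C b + S2 C b + S3 B b).
  by move=> a b; rewrite G1D D3 addrACA.
have G2Z : forall c a, (S1 C (c *: a) + S2 C (c *: a) + S3 B (c *: a)) =
   c *: (S1 C a + S2 C a + S3 B a).
  by move=> c a; rewrite Z1 Z2 Z3 !scalerDr.
have Q2 := combine G1D G1Z D3 Z3 (fun v => etrans (congr2 _ (c13 v) (c23 v)) (esym (D3 _ _)))
  (sums_uniq _ _) u12' Q1 P3.
have Q3 := combine G2D G2Z D4 Z4
  (fun v => etrans (congr2 _ (congr2 _ (c14 v) (c24 v)) (c34 v))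
     (esym (etrans (D4 _ _) (congr2 _ (D4 _ _) erefl))))
  (sums_uniq _ _) u12 Q2 P4.
exact: Q3.
Qed.
End T4.

Section T3.
Variables (R : realType) (n : nat).
Notation I3 := ('I_n * 'I_n * 'I_n)%type.
Definition q1 (t : I3) := t.1.1.
Definition q2 (t : I3) := t.1.2.
Definition q3 (t : I3) := t.2.
Definition v1 (t : I3) m : I3 := (m, t.1.2, t.2).
Definition v2 (t : I3) m : I3 := (t.1.1, m, t.2).
Definition v3 (t : I3) m : I3 := (t.1.1, t.1.2, m).
Notation U1 K := (@slot R n _ q1 v1 K).
Notation U2 K := (@slot R n _ q2 v2 K).
Notation U3 K := (@slot R n _ q3 v3 K).

Lemma actCY_slots A (T : tens3 R n) :
  actCY A T = U1 (Cm A) T + U2 (Cm A) T + U3 (Cm A) T.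
Proof.
apply/ffunP => -[[p q] s]; rewrite !ffunE /= !big_split /=.
by [].
Qed.

Definition g3 A (T : tens3 R n) := U1 (Cm A) T + U2 (Cm A) T + U3 (Cm A) T.

Lemma Pop_CY A (HC : Cm A *m Cm A = (1 + 2) *: Cm A - (1 * 2) *: 1%:M) (T : tens3 R n) :
  Pop (actCY A) (sums (sums [:: 1; 2] [:: 1; 2]) [:: 1; 2]) T = 0.
Proof.
rewrite (Pop_ext _ _ (f' := g3 A)); last by move=> x; rewrite actCY_slots.
have u12 : uniq [:: 1; 2 : R] by rewrite /= inE andbT; apply/negP => /eqP; lra.
set C := Cm A.
have D1 := @slotD R n _ q1 v1 C.
have D2 := @slotD R n _ q2 v2 C.
have D3 := @slotD R n _ q3 v3 C.
have Z1 := @slotZ R n _ q1 v1 C.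
have Z2 := @slotZ R n _ q2 v2 C.
have Z3 := @slotZ R n _ q3 v3 C.
have P1 : forall v, Pop (U1 C) [:: 1; 2] v = 0.
  by move=> v; apply: slot_Pop => // -[[a b] c].
have P2 : forall v, Pop (U2 C) [:: 1; 2] v = 0.
  by move=> v; apply: slot_Pop => // -[[a b] c].
have P3 : forall v, Pop (U3 C) [:: 1; 2] v = 0.
  by move=> v; apply: slot_Pop => // -[[a b] c].
have c12 : forall v, U1 C (U2 C v) = U2 C (U1 C v).
  by move=> v; apply: slot_comm => // -[[a b] c].
have c13 : forall v, U1 C (U3 C v) = U3 C (U1 C v).
  by move=> v; apply: slot_comm => // -[[a b] c].
have c23 : forall v, U2 C (U3 C v) = U3 C (U2 C v).
  by move=> v; apply: slot_comm => // -[[a b] c].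
have G1D : forall a b, (U1 C (a + b) + U2 C (a + b)) = (U1 C a + U2 C a) + (U1 C b + U2 C b).
  by move=> a b; rewrite D1 D2 addrACA.
have G1Z : forall c a, (U1 C (c *: a) + U2 C (c *: a)) = c *: (U1 C a + U2 C a).
  by move=> c a; rewrite Z1 Z2 scalerDr.
have Q1 := combine D1 Z1 D2 Z2 c12 u12 u12 P1 P2.
have Q2 := combine G1D G1Z D3 Z3 (fun v => etrans (congr2 _ (c13 v) (c23 v)) (esym (D3 _ _)))
  (sums_uniq _ _) u12 Q1 P3.
exact: Q2.
Qed.
End T3.

Lemma actWeyl_D (R : realType) n A (a b : tens4 R n) : actWeyl A (a + b) = actWeyl A a + actWeyl A b.
Proof.
rewrite !actWeyl_slots !slotD; apply/ffunP => t; rewrite !ffunE; ring.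
Qed.
Lemma actWeyl_Z (R : realType) n A c (a : tens4 R n) : actWeyl A (c *: a) = c *: actWeyl A a.
Proof. by rewrite !actWeyl_slots !slotZ !scalerDr. Qed.
Lemma actCY_D (R : realType) n A (a b : tens3 R n) : actCY A (a + b) = actCY A a + actCY A b.
Proof.
rewrite !actCY_slots !slotD; apply/ffunP => t; rewrite !ffunE; ring.
Qed.
Lemma actCY_Z (R : realType) n A c (a : tens3 R n) : actCY A (c *: a) = c *: actCY A a.
Proof. by rewrite !actCY_slots !slotZ !scalerDr. Qed.

Section W4.
Variables (R : realType) (n : nat).

Lemma inWeyl_Z c (T : tens4 R n) : inWeyl T -> inWeyl (c *: T).
Proof.
move=> [HA [H1 [HB [H2 H3]]]]; split; [|split; [|split; [|split]]].
- by move=> i j k l; rewrite !ffunE HA scalerN.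
- by move=> i j; under eq_bigr => k _ do rewrite !ffunE; rewrite -scaler_sumr H1 scaler0.
- by move=> i j k l; rewrite !ffunE -!scalerDr HB scaler0.
- by move=> i j; under eq_bigr => k _ do rewrite !ffunE; rewrite -scaler_sumr H2 scaler0.
- by move=> i j; under eq_bigr => k _ do rewrite !ffunE; rewrite -scaler_sumr H3 scaler0.
Qed.

Lemma inWeyl_B (a b : tens4 R n) : inWeyl a -> inWeyl b -> inWeyl (a - b).
Proof.
move=> [HA [H1 [HB [H2 H3]]]] [HA' [H1' [HB' [H2' H3']]]].
split; [|split; [|split; [|split]]].
- by move=> i j k l; rewrite !ffunE HA HA' opprB addrC opprK.
- by move=> i j; under eq_bigr => k _ do rewrite !ffunE; rewrite sumrB H1 H1' subrr.
- move=> i j k l; rewrite !ffunE.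
  have E : forall x y z x' y' z' : R, x - x' + (y - y') + (z - z') = (x + y + z) - (x' + y' + z') by move=> *; ring.
  by rewrite E HB HB' subrr.
- by move=> i j; under eq_bigr => k _ do rewrite !ffunE; rewrite sumrB H2 H2' subrr.
- by move=> i j; under eq_bigr => k _ do rewrite !ffunE; rewrite sumrB H3 H3' subrr.
Qed.

Lemma inWeyl_act A (T : tens4 R n) : (forall p i, Cm A p i = - Bm A i p) ->
  inWeyl T -> inWeyl (actWeyl A T).
Proof.
move=> Hrel [HA [H1 [HB [H2 H3]]]].
set C := Cm A; set B := Bm A.
split; [|split; [|split; [|split]]].
- move=> i j k l; rewrite !ffunE /= -sumrN; apply: eq_bigr => m _.
  rewrite (HA m i k l) (HA j m k l) (HA j i m l) (HA j i k m); ring.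
- move=> i j.
  under eq_bigr => k _ do rewrite ffunE /= !big_split /=.
  rewrite !big_split /=.
  have t1 : \sum_(k < n) \sum_(m < n) C i m * T (m, j, k, k) = 0.
    by rewrite exchange_big; apply: big1 => m _; rewrite -mulr_sumr H1 mulr0.
  have t2 : \sum_(k < n) \sum_(m < n) C j m * T (i, m, k, k) = 0.
    by rewrite exchange_big; apply: big1 => m _; rewrite -mulr_sumr H1 mulr0.
  rewrite t1 t2 add0r add0r [X in _ + X]exchange_big -big_split; apply: big1 => k _.
  rewrite -big_split; apply: big1 => m _ /=; rewrite Hrel; ring.
- move=> i j k l; rewrite !ffunE /= -!big_split /=; apply: big1 => m _.
  have e1 : T (m, j, k, l) = - (T (j, l, k, m) + T (l, m, k, j)).
    by move: (HB m j k l); rewrite -addrA => /eqP; rewrite addr_eq0 => /eqP.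
  have e2 : T (i, m, k, l) = - (T (m, l, k, i) + T (l, i, k, m)).
    by move: (HB i m k l); rewrite -addrA => /eqP; rewrite addr_eq0 => /eqP.
  have e3 : T (i, j, k, m) = - (T (j, m, k, i) + T (m, i, k, j)).
    by move: (HB i j k m); rewrite -addrA => /eqP; rewrite addr_eq0 => /eqP.
  have e4 : T (i, j, m, l) = - (T (j, l, m, i) + T (l, i, m, j)).
    by move: (HB i j m l); rewrite -addrA => /eqP; rewrite addr_eq0 => /eqP.
  rewrite e1 e2 e3 e4; ring.
- move=> j l.
  under eq_bigr => k _ do rewrite ffunE /= !big_split /=.
  rewrite !big_split /=.
  have t2 : \sum_(k < n) \sum_(m < n) C j m * T (k, m, k, l) = 0.
    by rewrite exchange_big; apply: big1 => m _; rewrite -mulr_sumr H2 mulr0.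
  have t4 : \sum_(k < n) \sum_(m < n) C l m * T (k, j, k, m) = 0.
    by rewrite exchange_big; apply: big1 => m _; rewrite -mulr_sumr H2 mulr0.
  rewrite t2 t4 !addr0 [X in _ + X]exchange_big -big_split; apply: big1 => k _.
  rewrite -big_split; apply: big1 => m _ /=; rewrite Hrel; ring.
- move=> i l.
  under eq_bigr => k _ do rewrite ffunE /= !big_split /=.
  rewrite !big_split /=.
  have t1 : \sum_(k < n) \sum_(m < n) C i m * T (m, k, k, l) = 0.
    by rewrite exchange_big; apply: big1 => m _; rewrite -mulr_sumr H3 mulr0.
  have t4 : \sum_(k < n) \sum_(m < n) C l m * T (i, k, k, m) = 0.
    by rewrite exchange_big; apply: big1 => m _; rewrite -mulr_sumr H3 mulr0.
  rewrite t1 t4 add0r !addr0 [X in _ + X]exchange_big -big_split; apply: big1 => k _.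
  rewrite -big_split; apply: big1 => m _ /=; rewrite Hrel; ring.
Qed.
End W4.

Section W3.
Variables (R : realType) (n : nat).
Lemma inCY_Z c (T : tens3 R n) : inCY T -> inCY (c *: T).
Proof. by move=> HA i j l; rewrite !ffunE HA scalerN. Qed.
Lemma inCY_B (a b : tens3 R n) : inCY a -> inCY b -> inCY (a - b).
Proof. by move=> HA HA' i j l; rewrite !ffunE HA HA' opprB addrC opprK. Qed.
Lemma inCY_act A (T : tens3 R n) : inCY T -> inCY (actCY A T).
Proof.
move=> HA i j l; rewrite !ffunE /= -sumrN; apply: eq_bigr => m _.
rewrite (HA m i l) (HA j m l) (HA j i m); ring.
Qed.
End W3.

Section Mx.
Variables (R : realType) (n : nat).
Implicit Types (X Y : 'cV[R]_n) (Z W : 'rV[R]_n).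

Lemma br_gm1_D (d : 'M[R]_1) (M : 'M[R]_n) Y :
  br (block_mx d 0 0 M) (gm1 Y) = gm1 (M *m Y - Y *m d).
Proof.
rewrite /br /gm1 !mulmx_block !mulmx0 !mul0mx !addr0 !add0r opp_block_mx add_block_mx.
by rewrite ?subrr.
Qed.

Lemma br_D_g1 (d : 'M[R]_1) (M : 'M[R]_n) W :
  br (block_mx d 0 0 M) (g1 W) = g1 (d *m W - W *m M).
Proof.
rewrite /br /g1 !mulmx_block !mulmx0 !mul0mx !addr0 !add0r opp_block_mx add_block_mx.
by rewrite ?subr0 ?addr0 ?add0r ?oppr0 ?subrr ?sub0r.
Qed.

Lemma br_gm1_D' (d : 'M[R]_1) (M : 'M[R]_n) Y :
  br (gm1 Y) (block_mx d 0 0 M) = gm1 (Y *m d - M *m Y).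
Proof.
rewrite /br /gm1 !mulmx_block !mulmx0 !mul0mx !addr0 !add0r opp_block_mx add_block_mx.
by rewrite ?subr0 ?addr0 ?add0r ?oppr0 ?subrr ?sub0r.
Qed.

Lemma brXZ X Z : br (gm1 X) (g1 Z) = block_mx (- (Z *m X)) 0 0 (X *m Z).
Proof.
rewrite /br /gm1 /g1 !mulmx_block !mulmx0 !mul0mx !addr0 !add0r opp_block_mx add_block_mx.
by rewrite ?subr0 ?addr0 ?add0r ?oppr0 ?subrr ?sub0r.
Qed.

Lemma brZX X Z : br (g1 Z) (gm1 X) = block_mx (Z *m X) 0 0 (- (X *m Z)).
Proof.
rewrite /br /gm1 /g1 !mulmx_block !mulmx0 !mul0mx !addr0 !add0r opp_block_mx add_block_mx.
by rewrite ?subr0 ?addr0 ?add0r ?oppr0 ?subrr ?sub0r.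
Qed.

Lemma gm1_inj X Y : gm1 X = gm1 Y -> X = Y.
Proof. by move/eq_block_mx => [_ _ ->]. Qed.
Lemma g1_inj Z W : g1 Z = g1 W -> Z = W.
Proof. by move/eq_block_mx => [_ -> _]. Qed.
Lemma gm1_0 : gm1 (0 : 'cV[R]_n) = 0.
Proof. by rewrite /gm1 block_mx0. Qed.
Lemma gm1Z c X : c *: gm1 X = gm1 (c *: X).
Proof. by rewrite /gm1 scale_block_mx !scaler0. Qed.
Lemma g1Z c Z : c *: g1 Z = g1 (c *: Z).
Proof. by rewrite /g1 scale_block_mx !scaler0. Qed.

Lemma ZXE Z X : Z *m X = (pair Z X)%:M.
Proof. exact: mx11_scalar. Qed.

Lemma XZY X Z Y : X *m Z *m Y = pair Z Y *: X.
Proof. by rewrite -mulmxA ZXE mul_mx_scalar. Qed.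
Lemma WXZ W X Z : W *m (X *m Z) = pair W X *: Z.
Proof. by rewrite mulmxA ZXE mul_scalar_mx. Qed.

Lemma pairZ Z c X : pair Z (c *: X) = c * pair Z X.
Proof. by rewrite /pair -scalemxAr mxE. Qed.

Lemma Z_nz Z : Z != 0 -> exists j, Z 0 j != 0.
Proof.
move=> hZ; apply/existsP; apply: contraNT hZ; rewrite negb_exists => /forallP H.
by apply/eqP/matrixP => i j; rewrite ord1 mxE; apply/eqP; have := H j; rewrite negbK.
Qed.

Lemma scaled_X_eq0 c X Z : Z != 0 -> c *: X = 0 -> pair Z X = 0 \/ c = 0.
Proof.
move=> hZ /eqP; rewrite scaler_eq0 => /orP [/eqP ->|/eqP ->]; first by right.
by left; rewrite /pair mulmx0 mxE.
Qed.

Lemma inC_iff X Z : Z != 0 -> inC Z X <-> X = 0.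
Proof.
move=> hZ; rewrite /inC brXZ -(block_mx0 _ 1 n 1 n); split.
  move/eq_block_mx => [_ _ _ H]; have [j Zj] := Z_nz hZ.
  apply/matrixP => i k; rewrite ord1 [RHS]mxE.
  have := congr1 (fun M : 'M[R]_n => M i j) H; rewrite !mxE big_ord1 => /eqP.
  by rewrite mulf_eq0 (negbTE Zj) orbF => /eqP.
by move=> ->; rewrite mul0mx mulmx0 oppr0.
Qed.

Lemma inF_iff X Z : Z != 0 -> inF Z X <-> pair Z X = 0.
Proof.
move=> hZ; rewrite /inF brXZ br_gm1_D' XZY mulmxN ZXE mul_mx_scalar -gm1_0.
have E : - (pair Z X *: X) - pair Z X *: X = (- (pair Z X + pair Z X)) *: X.
  by rewrite scaleNr scalerDl opprD.
rewrite E; split => [/gm1_inj H|H].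
  by case: (scaled_X_eq0 hZ H) => // /eqP; rewrite oppr_eq0 => /eqP; lra.
by rewrite H addr0 oppr0 scale0r.
Qed.

Lemma inT_iff X Z : Z != 0 -> inT Z X <-> pair Z X = 1.
Proof.
move=> hZ; rewrite /inT brZX br_gm1_D br_D_g1 mulNmx XZY ZXE mul_mx_scalar.
rewrite mul_scalar_mx mulmxN WXZ opprK gm1Z g1Z; split.
  move=> [_ /g1_inj /eqP]; rewrite -subr_eq0 -scalerDl -scalerBl scaler_eq0 (negbTE hZ) orbF.
  by move=> /eqP; lra.
move=> ->; rewrite !scale1r; split; congr (_ _).
  by rewrite scaleNr scaler_nat mulr2n opprD.
by rewrite scaler_nat mulr2n.
Qed.

Lemma brA_gm1 X Z Y : pair Z X = 1 ->
  br (br (g1 Z) (gm1 X)) (gm1 Y) = gm1 (- (pair Z Y *: X) - Y).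
Proof. by move=> H; rewrite brZX br_gm1_D mulNmx XZY ZXE H mulmx1. Qed.

Lemma BmE X Z : pair Z X = 1 -> Bm (br (g1 Z) (gm1 X)) = - (1%:M + X *m Z).
Proof.
move=> H; apply/matrixP => k m; rewrite mxE brZX br_gm1_D /gm1 block_mxKdl ZXE H mulmx1.
rewrite /em1 mulNmx -colE !mxE eqxx andbT; ring.
Qed.

Lemma CmE X Z : pair Z X = 1 -> Cm (br (g1 Z) (gm1 X)) = (1%:M + X *m Z)^T.
Proof.
move=> H; apply/matrixP => p i; rewrite mxE brZX br_D_g1 /g1 block_mxKur ZXE H mul1mx.
rewrite mulmxN opprK /e1 -rowE !mxE eqxx /= eq_sym; ring.
Qed.

Lemma EE X Z : pair Z X = 1 -> let E := 1%:M + X *m Z in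
  E *m E = (1 + 2) *: E - (1 * 2) *: 1%:M.
Proof.
move=> H E.
have NN : X *m Z *m (X *m Z) = X *m Z by rewrite !mulmxA -(mulmxA X Z X) ZXE H mulmx1.
rewrite /E mulmxDl !mulmxDr !mul1mx !mulmx1 NN.
apply/matrixP => i j; rewrite !mxE; ring.
Qed.

Lemma CmSq X Z : pair Z X = 1 -> let C := Cm (br (g1 Z) (gm1 X)) in
  C *m C = (1 + 2) *: C - (1 * 2) *: 1%:M.
Proof.
move=> H C; rewrite /C CmE // -trmx_mul EE //.
apply/matrixP => i j; by rewrite !mxE (eq_sym i j).
Qed.

Lemma BmSq X Z : pair Z X = 1 -> let B := Bm (br (g1 Z) (gm1 X)) in
  B *m B = (-1 + -2) *: B - ((-1) * (-2)) *: 1%:M.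
Proof.
move=> H B; rewrite /B BmE // mulNmx mulmxN opprK EE //.
apply/matrixP => i j; rewrite !mxE; ring.
Qed.

Lemma CmBm X Z : pair Z X = 1 -> forall p i,
  Cm (br (g1 Z) (gm1 X)) p i = - Bm (br (g1 Z) (gm1 X)) i p.
Proof. by move=> H p i; rewrite CmE // BmE // !mxE opprK. Qed.

Lemma T_exists Z : Z != 0 -> exists X, pair Z X = 1.
Proof.
move=> hZ; have [j Zj] := Z_nz hZ.
have nz : pair Z Z^T != 0.
  apply/eqP => H0; move: H0; rewrite /pair mxE.
  under eq_bigr => k _ do rewrite mxE.
  move=> H0.
  have := @psumr_eq0P R _ predT (fun k => Z 0 k * Z 0 k) (fun k _ => ltac:(by rewrite /= -expr2 sqr_ge0)) H0 j isT.
  by move=> /eqP; rewrite mulf_eq0 orbb (negbTE Zj).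
exists ((pair Z Z^T)^-1 *: Z^T); by rewrite pairZ mulVf.
Qed.
End Mx.
Unset Implicit Arguments. Set Strict Implicit.

Lemma pairB (R : realType) n (Z : 'rV[R]_n) a b : pair Z (a - b) = pair Z a - pair Z b.
Proof. by rewrite /pair mulmxBr !mxE. Qed.
Lemma pair0 (R : realType) n (Z : 'rV[R]_n) : pair Z 0 = 0.
Proof. by rewrite /pair mulmx0 mxE. Qed.

Theorem lemma3p2 (R : realType) (n : nat) (hn : (2 <= n)%N)
    (Z : 'rV[R]_n) (hZ : Z != 0) :
  (* 0 = C(Z) *)
  (forall X, inC Z X <-> X = 0) /\
  (* C(Z) subset F(Z) *)
  (forall X, inC Z X -> inF Z X) /\
  (* F(Z) = {X | ZX = 0} *)
  (forall X, inF Z X <-> pair Z X = 0) /\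
  (* T(Z) = {X | ZX = 1} *)
  (forall X, inT Z X <-> pair Z X = 1) /\
  (* A = [Z,X] acts diagonalizably on g_{-1} *)
  (forall X, inT Z X ->
     forall Y : 'cV[R]_n,
       sum_of_eig (fun l Y' => br (br (g1 Z) (gm1 X)) (gm1 Y') = l *: gm1 Y')
         (fun _ => True) Y) /\
  (* (1) eigenvalues on g_{-1} non-positive; 0-eigenspace = C(Z) *)
  (forall X, inT Z X ->
     (forall (l : R) (Y : 'cV[R]_n), Y != 0 ->
        br (br (g1 Z) (gm1 X)) (gm1 Y) = l *: gm1 Y -> l <= 0) /\
     (forall Y, br (br (g1 Z) (gm1 X)) (gm1 Y) = 0 <-> inC Z Y)) /\
  (* diagonalizability on W, (2) and (3) *)
  ((2 < n)%N -> W_claims Z (@inWeyl R n) (@actWeyl R n)) /\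
  (n = 2%N -> W_claims Z (@inCY R n) (@actCY R n)).
Proof.
have iC := fun X => inC_iff X hZ.
have iF := fun X => inF_iff X hZ.
have iT := fun X => inT_iff X hZ.
have b12 : forall x : R, x \in [:: 1; 2] -> 1 <= x.
  by move=> x; rewrite !inE => /orP [] /eqP ->; lra.
have bm : forall x : R, x \in [:: -1; -2] -> -2 <= x.
  by move=> x; rewrite !inE => /orP [] /eqP ->; lra.
have [X0 HX0] := T_exists hZ.
split; first exact: iC.
split; first by move=> X H; rewrite /inF H /br mulmx0 mul0mx subr0.
split; first exact: iF.
split; first exact: iT.
split.
  move=> X /iT H Y; set c := pair Z Y.
  have -> : Y = c *: X + (Y - c *: X) by rewrite addrC subrK.
  apply: soeD.
    apply: (@soe1 _ _ _ _ (-2)) => //.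
    rewrite brA_gm1 // pairZ H mulr1 gm1Z; congr (gm1 _).
    by rewrite scaleNr scaler_nat mulr2n opprD.
  apply: (@soe1 _ _ _ _ (-1)) => //.
  rewrite brA_gm1 // pairB pairZ H mulr1 subrr scale0r oppr0 sub0r.
  by rewrite scaleN1r /gm1 opp_block_mx !oppr0.
split.
  move=> X /iT H; split.
    move=> l Y Ynz; rewrite brA_gm1 // gm1Z => /gm1_inj E.
    have E2 := congr1 (pair Z) E; move: E2.
    rewrite pairB -scaleN1r !pairZ H mulr1 => E2.
    case: (eqVneq (pair Z Y) 0) => s0.
      move: E; rewrite s0 scale0r oppr0 sub0r => E.
      have : (l + 1) *: Y = 0 by rewrite scalerDl scale1r -E addNr.
      move/eqP; rewrite scaler_eq0 (negbTE Ynz) orbF => /eqP; lra.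
    have : (l + 2) * pair Z Y = 0.
      by rewrite mulrDl -E2; ring.
    move/eqP; rewrite mulf_eq0 (negbTE s0) orbF => /eqP; lra.
  move=> Y; rewrite (iC Y) brA_gm1 // -(gm1_0 R n); split => [/gm1_inj E | ->].
    have E2 := congr1 (pair Z) E; move: E2.
    rewrite pairB -scaleN1r !pairZ H pair0 => E2.
    have s0 : pair Z Y = 0 by lra.
    by move: E; rewrite s0 scale0r oppr0 sub0r => /eqP; rewrite oppr_eq0 => /eqP.
  by rewrite pair0 scale0r oppr0 addr0.
have W4 : forall X, inT Z X ->
   diag_on (@inWeyl R n) (actWeyl (br (g1 Z) (gm1 X))) /\
   (forall w, in_ss (@inWeyl R n) (actWeyl (br (g1 Z) (gm1 X))) w -> w = 0) /\
   (forall w, in_st (@inWeyl R n) (actWeyl (br (g1 Z) (gm1 X))) w -> w = 0).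
  move=> X /iT H.
  apply: (W_generic (f := actWeyl (br (g1 Z) (gm1 X)))); [exact: actWeyl_D|exact: actWeyl_Z|
    exact: inWeyl_Z|exact: inWeyl_B|by move=> a; apply: inWeyl_act; apply: CmBm|idtac|
    by move=> v; apply: Pop_weyl; [apply: CmSq | apply: BmSq]|idtac].
  - exact: sums_uniq.
  - move=> l Hl; have := sums_ge (sums_ge (sums_ge b12 b12) bm) b12 Hl; lra.
have W3 : forall X, inT Z X ->
   diag_on (@inCY R n) (actCY (br (g1 Z) (gm1 X))) /\
   (forall w, in_ss (@inCY R n) (actCY (br (g1 Z) (gm1 X))) w -> w = 0) /\
   (forall w, in_st (@inCY R n) (actCY (br (g1 Z) (gm1 X))) w -> w = 0).
  move=> X /iT H.
  apply: (W_generic (f := actCY (br (g1 Z) (gm1 X)))); [exact: actCY_D|exact: actCY_Z|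
    exact: inCY_Z|exact: inCY_B|by move=> a; apply: inCY_act|idtac|
    by move=> v; apply: Pop_CY; apply: CmSq|idtac].
  - exact: sums_uniq.
  - move=> l Hl; have := sums_ge (sums_ge b12 b12) b12 Hl; lra.
have HT0 : inT Z X0 by apply/iT.
split.
  move=> _; split; first by move=> X HX; case: (W4 X HX).
  split; first by move=> X HX; case: (W4 X HX) => _ [].
  by move=> w Hw; case: (W4 X0 HT0) => _ [_]; apply; apply: Hw.
move=> _; split; first by move=> X HX; case: (W3 X HX).
split; first by move=> X HX; case: (W3 X HX) => _ [].
by move=> w Hw; case: (W3 X0 HT0) => _ [_]; apply; apply: Hw.
Qed.
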